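(* Let $q$ be a self-join-free Boolean conjunctive query, let $q_0\subseteq q$, let $\mathbf{db}$ be a database, and let $\mathbf{o}$ be a garbage set for $q_0$ in $\mathbf{db}$. Then every repair of $\mathbf{db}$ satisfies $q$ if and only if every repair of $\mathbf{db}\setminus\mathbf{o}$ satisfies $q$.
   Context: Every relation name has a signature $[n,k]$ ($1\le k\le n$; primary-key positions $1,\dots,k$) and a mode in $\{\mathsf{c},\mathsf{i}\}$. Facts are variable-free atoms; facts are key-equal if same relation name and same primary-key values. A database is a finite set of facts with no two distinct key-equal facts of mode $\mathsf{c}$, all of whose relation names occur in $q$. The block of a fact $A$ in $\mathbf{db}$ is the set of facts of $\mathbf{db}$ key-equal to $A$. A repair of a set of facts is a maximal subset without two distinct key-equal facts. A self-join-free Boolean conjunctive query is a finite set of atoms with distinct relation names, satisfied by a set of facts $\mathbf{s}$ iff some valuation $\theta$ of its variables has $\theta(q)\subseteq\mathbf{s}$; for a fact $A$, $\mathrm{atom}(A)$ is the atom of $q$ with the same relation name. A subset $\mathbf{o}\subseteq\mathbf{db}$ is a garbage set for $q_0$ in $\mathbf{db}$ if (1) for every $A\in\mathbf{o}$, $\mathrm{atom}(A)\in q_0$ and the block of $A$ in $\mathbf{db}$ is included in $\mathbf{o}$; and (2) there is a repair $\mathbf{r}$ of $\mathbf{o}$ such that for every valuation $\theta$ of the variables of $q$, if $\theta(q)\subseteq(\mathbf{db}\setminus\mathbf{o})\cup\mathbf{r}$ then $\theta(q_0)\cap\mathbf{r}=\emptyset$. *)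

(* Defs.v *)
From Stdlib Require Import List.
Import ListNotations.
Set Implicit Arguments.

Inductive mode := ModeC | ModeI.

Section CQA.
(* Rname: relation names; Var: variables; Const: constants.
   arity r = n and keylen r = k for the signature [n,k] of r;
   primary-key positions are 1..k, i.e. the first k arguments. *)
Context {Rname Var Const : Type}.
Context (arity keylen : Rname -> nat) (md : Rname -> mode).

Definition sig_ok : Prop := forall r, 1 <= keylen r /\ keylen r <= arity r.

Definition term := (Var + Const)%type.

Record atom := Atom { arel : Rname; aargs : list term }.
Record fact := Fact { frel : Rname; fargs : list Const }.

Definition atom_wf (a : atom) : Prop := length (aargs a) = arity (arel a).
Definition fact_wf (f : fact) : Prop := length (fargs f) = arity (frel f).

Definition fset := fact -> Prop.
Definition subset (s t : fset) : Prop := forall f, s f -> t f.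
Definition setD (s t : fset) : fset := fun f => s f /\ ~ t f.
Definition setU (s t : fset) : fset := fun f => s f \/ t f.

Definition key_equal (f g : fact) : Prop :=
  frel f = frel g /\
  firstn (keylen (frel f)) (fargs f) = firstn (keylen (frel g)) (fargs g).

Definition sjf_query (q : list atom) : Prop :=
  NoDup (map arel q) /\ forall a, In a q -> atom_wf a.

Definition database (q : list atom) (db : list fact) : Prop :=
  (forall f, In f db -> fact_wf f) /\
  (forall f g, In f db -> In g db -> f <> g -> key_equal f g ->
      md (frel f) <> ModeC) /\
  (forall f, In f db -> exists a, In a q /\ arel a = frel f).

Definition setof (db : list fact) : fset := fun f => In f db.

Definition block (s : fset) (A : fact) : fset := fun B => s B /\ key_equal A B.

Definition consistent (s : fset) : Prop :=
  forall f g, s f -> s g -> key_equal f g -> f = g.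

Definition repair (s r : fset) : Prop :=
  subset r s /\ consistent r /\
  forall r', subset r r' -> subset r' s -> consistent r' -> subset r' r.

Definition valuation := Var -> Const.
Definition tval (th : valuation) (t : term) : Const :=
  match t with inl v => th v | inr c => c end.
Definition aval (th : valuation) (a : atom) : fact :=
  Fact (arel a) (map (tval th) (aargs a)).

Definition embeds (th : valuation) (q : list atom) (s : fset) : Prop :=
  forall a, In a q -> s (aval th a).

Definition satisfies (s : fset) (q : list atom) : Prop :=
  exists th : valuation, embeds th q s.

(* atom(A) is in q0 (q0 is a sub-list of q; relation names are unique in q) *)
Definition atom_of_in (q0 : list atom) (A : fact) : Prop :=
  exists a, In a q0 /\ arel a = frel A.

Definition garbage_set (q q0 : list atom) (db : list fact) (o : fset) : Prop :=
  subset o (setof db) /\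
  (forall A, o A -> atom_of_in q0 A /\ subset (block (setof db) A) o) /\
  (exists r, repair o r /\
     forall th : valuation, embeds th q (setU (setD (setof db) o) r) ->
       forall a, In a q0 -> ~ r (aval th a)).

End CQA.

(* Main.v *)
Require Import Defs.
From Stdlib Require Import List Classical.

Lemma nodup_map_inj {A B : Type} (f : A -> B) (l : list A) :
  NoDup (map f l) -> forall x y, In x l -> In y l -> f x = f y -> x = y.
Proof.
  induction l as [|a l IH]; simpl; intros Hn x y Hx Hy Hf; [contradiction|].
  inversion Hn as [|? ? Hnin Hn']; subst.
  destruct Hx as [<-|Hx], Hy as [<-|Hy]; auto.
  - exfalso; apply Hnin; rewrite Hf; apply in_map; auto.
  - exfalso; apply Hnin; rewrite <- Hf; apply in_map; auto.
Qed.

Lemma ke_sym {Rname Const : Type} (keylen : Rname -> nat) (f g : @fact Rname Const) :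
  key_equal keylen f g -> key_equal keylen g f.
Proof.
  unfold key_equal; intros [H1 H2]; split; auto.
Qed.

Theorem lemma16 (Rname Var Const : Type)
  (arity keylen : Rname -> nat) (md : Rname -> mode)
  (q q0 : list (@atom Rname Var Const)) (db : list (@fact Rname Const))
  (o : @fset Rname Const) :
  sig_ok arity keylen ->
  sjf_query arity q ->
  incl q0 q ->
  database arity keylen md q db ->
  garbage_set keylen q q0 db o ->
  ((forall r, repair keylen (setof db) r -> satisfies r q) <->
   (forall r, repair keylen (setD (setof db) o) r -> satisfies r q)).
Proof.
  intros _ [Hnd _] Hincl _ [Hosub [Hoblk [ro [[Hrosub [Hrocons Hromax]] Hro]]]].
  assert (Hcross : forall f g, o f -> setof db g -> key_equal keylen f g -> o g).
  { intros f g Hf Hg Hk. apply (proj2 (Hoblk f Hf)). split; auto. }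
  split.
  - intros H r' [Hr'sub [Hr'cons Hr'max]].
    set (R := setU r' ro).
    assert (HR : repair keylen (setof db) R).
    { split; [|split].
      - intros f [Hf|Hf]; [apply Hr'sub in Hf; apply Hf | apply Hosub, Hrosub, Hf].
      - intros f g [Hf|Hf] [Hg|Hg] Hk.
        + apply Hr'cons; auto.
        + exfalso. apply Hr'sub in Hf. apply (proj2 Hf).
          apply (Hcross g f); [apply Hrosub; exact Hg | exact (proj1 Hf) | apply ke_sym; exact Hk].
        + exfalso. apply Hr'sub in Hg. apply (proj2 Hg).
          apply (Hcross f g); [apply Hrosub; exact Hf | exact (proj1 Hg) | exact Hk].
        + apply Hrocons; auto.
      - intros R' HRR' HR'db HR'cons f Hf.
        destruct (classic (o f)) as [Ho|Ho].
        + right. apply (Hromax (fun g => R' g /\ o g)).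
          * intros g Hg. split; [apply HRR'; right; auto | apply Hrosub; auto].
          * intros g [_ Hg]; auto.
          * intros g h [Hg _] [Hh _]; apply HR'cons; auto.
          * split; auto.
        + left. apply (Hr'max (fun g => R' g /\ ~ o g)).
          * intros g Hg. split; [apply HRR'; left; auto | apply Hr'sub in Hg; apply Hg].
          * intros g [Hg Hng]; split; auto.
          * intros g h [Hg _] [Hh _]; apply HR'cons; auto.
          * split; auto. }
    destruct (H R HR) as [th Hth].
    exists th. intros a Ha.
    destruct (Hth a Ha) as [Hin|Hin]; auto.
    exfalso.
    assert (Hemb : embeds th q (setU (setD (setof db) o) ro)).
    { intros b Hb. destruct (Hth b Hb) as [Hb'|Hb'].
      - left. apply Hr'sub; auto.
      - right; auto. }
    destruct (proj1 (Hoblk _ (Hrosub _ Hin))) as [a' [Ha' Hrel]].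
    assert (a' = a).
    { apply (nodup_map_inj _ q Hnd); auto. }
    subst a'.
    apply (Hro th Hemb a Ha' Hin).
  - intros H r [Hrsub [Hrcons Hrmax]].
    set (r' := fun f => r f /\ ~ o f).
    assert (Hr' : repair keylen (setD (setof db) o) r').
    { split; [|split].
      - intros f [Hf Hnf]; split; auto.
      - intros f g [Hf _] [Hg _]; apply Hrcons; auto.
      - intros R' Hsub HR'db HR'cons f Hf.
        assert (HU : subset (setU R' (fun g => r g /\ o g)) r).
        { apply Hrmax.
          - intros g Hg. destruct (classic (o g)) as [Ho|Ho].
            + right; auto.
            + left; apply Hsub; split; auto.
          - intros g [Hg|[Hg _]]; [apply HR'db in Hg; apply Hg | apply Hrsub; auto].
          - intros g h [Hg|[Hg Hog]] [Hh|[Hh Hoh]] Hk.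
            + apply HR'cons; auto.
            + exfalso. apply HR'db in Hg. apply (proj2 Hg).
              apply (Hcross h g); [exact Hoh | exact (proj1 Hg) | apply ke_sym; exact Hk].
            + exfalso. apply HR'db in Hh. apply (proj2 Hh).
              apply (Hcross g h); [exact Hog | exact (proj1 Hh) | exact Hk].
            + apply Hrcons; auto. }
        split.
        + apply HU; left; auto.
        + apply HR'db in Hf; apply Hf. }
    destruct (H r' Hr') as [th Hth].
    exists th. intros a Ha. apply (Hth a Ha).
Qed.
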